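(* $\operatorname{cov}(\mathcal N)\le\mathfrak b_3$ and $\operatorname{non}(\mathcal N)\ge\mathfrak d_3$.
   Context: Let $T^*$ and $\rho$ be as follows, by induction on $h\ge0$: $T^*\cap\omega^0=\{\langle\rangle\}$; $\rho(h)=\max(|T^*\cap\omega^h|,h+2)$, $\pi(h)=((h+1)^2\rho(h)^{h+1})^{\rho(h)^h}$, $a(h)=\pi(h)^{h+2}$, $M(h)=a(h)^2$, and each $s\in T^*\cap\omega^h$ has the $M(h)$ immediate successors $s^\frown\ell$, $\ell<M(h)$. Put $b(h)=(h+1)^2\rho(h)^{h+1}$. An $R_3$-parameter is a set $\mathcal E\subseteq\omega^\omega$ such that every $e\in\mathcal E$ satisfies $\lim_n e(n)=\infty$, $e(n)\le n$, $\lim_n(n-e(n))=\infty$, and there is $e'\in\mathcal E$ with $e(n)+1\le e'(n)$ for almost all $n$; moreover for every countable $\mathcal E'\subseteq\mathcal E$ there is $e\in\mathcal E$ with $e(n)\ge e'(n)$ for almost all $n$, for every $e'\in\mathcal E'$. Fix an $R_3$-parameter $\mathcal E$ of size $\aleph_1$. Let $\mathcal S=\{\psi\in\prod_h\mathcal P(b(h)):\ |\psi(h)|\le\rho(h)^h\ \forall h\}$, $\mathcal S_e=\{\phi\in\prod_h\mathcal P(b(h)):\ |\phi(h)|\le\rho(h)^{e(h)}\ \forall h\}$, and $\hat{\mathcal S}=\bigcup_{e\in\mathcal E}\mathcal S_e$. For $\psi\in\mathcal S$, $\phi\in\hat{\mathcal S}$ let $\psi\,R_3\,\phi$ iff $\phi(n)\not\subseteq\psi(n)$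 for all but finitely many $n$. Let $\mathfrak b_3$ be the least size of a set $\mathcal A\subseteq\mathcal S$ such that no $\phi\in\hat{\mathcal S}$ satisfies $\psi R_3\phi$ for all $\psi\in\mathcal A$, and $\mathfrak d_3$ the least size of $\mathcal D\subseteq\hat{\mathcal S}$ such that every $\psi\in\mathcal S$ has some $\phi\in\mathcal D$ with $\psi R_3\phi$. $\mathcal N$ is the null ideal. *)

(* Defs.v *)
From Stdlib Require Import Reals Arith List.
Import ListNotations.
Open Scope R_scope.

(* Given the number L = |T^* ∩ ω^h| of nodes at level h, the parameters at h. *)
Definition rho_of (h L : nat) : nat := Nat.max L (h + 2).
Definition b_of (h L : nat) : nat := ((h + 1) ^ 2 * rho_of h L ^ (h + 1))%nat.
Definition pi_of (h L : nat) : nat := (b_of h L ^ (rho_of h L ^ h))%nat.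
Definition a_of (h L : nat) : nat := (pi_of h L ^ (h + 2))%nat.
Definition M_of (h L : nat) : nat := (a_of h L ^ 2)%nat.

(* levsize h = |T^* ∩ ω^h|: the root is the only node of level 0 and each
   node of level h has exactly M(h) immediate successors. *)
Fixpoint levsize (h : nat) : nat :=
  match h with
  | O => 1%nat
  | S k => (levsize k * M_of k (levsize k))%nat
  end.

Definition rho (h : nat) : nat := rho_of h (levsize h).
Definition piT (h : nat) : nat := pi_of h (levsize h).
Definition aT (h : nat) : nat := a_of h (levsize h).
Definition M (h : nat) : nat := M_of h (levsize h).
Definition b (h : nat) : nat := b_of h (levsize h).

Definition Tstar (s : list nat) : Prop :=
  forall i, (i < length s)%nat -> (nth i s 0 < M i)%nat.

(* An element of prod_h P(b(h)) is represented by its characteristic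
   functions: psi h i = true iff i ∈ psi(h); we require psi(h) ⊆ b(h). *)
Definition slalom := nat -> nat -> bool.

Definition in_prod_Pb (psi : slalom) : Prop :=
  forall h i, psi h i = true -> (i < b h)%nat.

Definition card_at (psi : slalom) (h : nat) : nat :=
  length (filter (psi h) (seq 0 (b h))).

Definition Sset (psi : slalom) : Prop :=
  in_prod_Pb psi /\ forall h, (card_at psi h <= rho h ^ h)%nat.

Definition S_e (e : nat -> nat) (phi : slalom) : Prop :=
  in_prod_Pb phi /\ forall h, (card_at phi h <= rho h ^ e h)%nat.

Definition Shat (E : (nat -> nat) -> Prop) (phi : slalom) : Prop :=
  exists e, E e /\ S_e e phi.

Definition subset_at (phi psi : slalom) (n : nat) : Prop :=
  forall i, phi n i = true -> psi n i = true.

Definition R3 (psi phi : slalom) : Prop :=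
  exists N, forall n, (N <= n)%nat -> ~ subset_at phi psi n.

Definition countable_set {T : Type} (X : T -> Prop) : Prop :=
  exists g : nat -> T, forall x, X x -> exists n, g n = x.

Definition tends_to_infty (f : nat -> nat) : Prop :=
  forall m, exists N, forall n, (N <= n)%nat -> (m <= f n)%nat.

Definition eventually_le (f g : nat -> nat) : Prop :=
  exists N, forall n, (N <= n)%nat -> (f n <= g n)%nat.

Definition R3_parameter (E : (nat -> nat) -> Prop) : Prop :=
  (forall e, E e ->
     tends_to_infty e /\
     (forall n, (e n <= n)%nat) /\
     tends_to_infty (fun n => (n - e n)%nat) /\
     (exists e', E e' /\ eventually_le (fun n => S (e n)) e')) /\
  (forall E' : (nat -> nat) -> Prop,
     (forall e', E' e' -> E e') -> countable_set E' ->
     exists e, E e /\ forall e', E' e' -> eventually_le e' e).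

(* |E| = aleph_1: E is uncountable and carries a strict linear order all of
   whose proper initial segments are countable. *)
Definition size_aleph1 {T : Type} (E : T -> Prop) : Prop :=
  ~ countable_set E /\
  exists lt : T -> T -> Prop,
    (forall x, ~ lt x x) /\
    (forall x y z, lt x y -> lt y z -> lt x z) /\
    (forall x y, E x -> E y -> x <> y -> lt x y \/ lt y x) /\
    (forall x, E x -> countable_set (fun y => E y /\ lt y x)).

Definition extends (s : list bool) (x : nat -> bool) : Prop :=
  forall i, (i < length s)%nat -> x i = nth i s false.

Definition null_set (X : (nat -> bool) -> Prop) : Prop :=
  forall eps : R, 0 < eps ->
    exists s : nat -> list bool,
      (forall x, X x -> exists n, extends (s n) x) /\
      (forall N, sum_f_R0 (fun n => (/ 2) ^ length (s n)) N <= eps).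

(* A ⊆ S witnesses b_3: no phi ∈ Ŝ R3-bounds all of A. *)
Definition R3_unbounded (E : (nat -> nat) -> Prop) (A : slalom -> Prop) : Prop :=
  (forall psi, A psi -> Sset psi) /\
  ~ (exists phi, Shat E phi /\ forall psi, A psi -> R3 psi phi).

(* Main.v *)
Require Import Defs.
From Stdlib Require Import Reals Arith List.
From Stdlib Require Import Lia Lra Classical.
Import ListNotations.

Local Open Scope nat_scope.

Fixpoint decode (l : list bool) : nat :=
  match l with [] => 0 | a :: l => (if a then 1 else 0) + 2 * decode l end.
Fixpoint code (L j : nat) : list bool :=
  match L with 0 => [] | S L => Nat.eqb (j mod 2) 1 :: code L (j / 2) end.

Lemma code_S L j : code (S L) j = Nat.eqb (j mod 2) 1 :: code L (j / 2).
Proof. reflexivity. Qed.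

Lemma code_decode t L : length t = L -> code L (decode t) = t.
Proof.
  intros <-. induction t as [|a t IH]; [reflexivity|].
  change (length (a :: t)) with (S (length t)).
  change (decode (a :: t)) with ((if a then 1 else 0) + 2 * decode t).
  rewrite code_S.
  assert (Ha : (if a then 1 else 0) <= 1) by (destruct a; lia).
  set (c := if a then 1 else 0) in *.
  replace (c + 2 * decode t) with (c + decode t * 2) by lia.
  rewrite Nat.Div0.mod_add, Nat.div_add by lia.
  replace (c / 2) with 0 by (destruct a; reflexivity). rewrite Nat.add_0_l.
  rewrite IH. destruct a; reflexivity.
Qed.

Lemma code_length L j : length (code L j) = L.
Proof. revert j; induction L; intros j; simpl; auto. Qed.

Lemma decode_lt t : decode t < 2 ^ length t.
Proof. induction t as [|a t IH]; simpl; [lia|]. destruct a; lia. Qed.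

Definition Lb (n : nat) : nat := Nat.log2 (b n).
Definition ibit (n : nat) (x : nat -> bool) : nat := decode (map x (seq 0 (Lb n))).
Definition phi (x : nat -> bool) : slalom := fun n i => Nat.eqb i (ibit n x).

Lemma rho_ge n : n + 2 <= rho n.
Proof. unfold rho, rho_of. lia. Qed.

Lemma b_eq n : b n = (n+1)^2 * rho n ^ (n+1).
Proof. reflexivity. Qed.

Lemma b_pos n : 0 < b n.
Proof.
  rewrite b_eq. pose proof (rho_ge n).
  assert ((n+1)^2 <> 0) by (apply Nat.pow_nonzero; lia).
  assert (rho n ^ (n+1) <> 0) by (apply Nat.pow_nonzero; lia). nia.
Qed.

Lemma Lb_spec n : 2 ^ Lb n <= b n < 2 * 2 ^ Lb n.
Proof. unfold Lb. pose proof (Nat.log2_spec (b n) (b_pos n)). simpl in H. lia. Qed.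

Lemma ibit_lt n x : ibit n x < b n.
Proof.
  unfold ibit. pose proof (decode_lt (map x (seq 0 (Lb n)))).
  rewrite length_map, length_seq in H. pose proof (Lb_spec n). lia.
Qed.

Lemma key_nat (psi : slalom) n : card_at psi n <= rho n ^ n ->
  card_at psi n * ((n+1)*(n+2)) <= 2 * 2 ^ Lb n.
Proof.
  intros Hc. pose proof (Lb_spec n). pose proof (rho_ge n).
  assert (Hb : b n = rho n ^ n * ((n+1)*((n+1)*rho n))).
  { rewrite b_eq, Nat.pow_add_r, Nat.pow_1_r, Nat.pow_2_r. ring. }
  rewrite Hb in H.
  set (P := rho n ^ n) in *. set (r := rho n) in *. set (c := card_at psi n) in *.
  assert (c * ((n+1)*(n+2)) <= P * ((n+1)*(n+2))) by (apply Nat.mul_le_mono_r; lia).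
  assert (P * ((n+1)*(n+2)) <= P * ((n+1)*((n+1)*r))).
  { apply Nat.mul_le_mono_l. apply Nat.mul_le_mono_l. nia. }
  lia.
Qed.

Lemma filter_notin (c : nat) l : ~ In c l -> filter (fun i => Nat.eqb i c) l = [].
Proof.
  induction l as [|a l IH]; intros H; simpl; auto.
  destruct (Nat.eqb_spec a c). subst; exfalso; apply H; left; auto.
  apply IH. intro; apply H; right; auto.
Qed.

Lemma filter_le1 (c : nat) l : NoDup l -> length (filter (fun i => Nat.eqb i c) l) <= 1.
Proof.
  induction l as [|a l IH]; intros H; simpl; [lia|].
  inversion H; subst.
  destruct (Nat.eqb_spec a c).
  - subst. rewrite filter_notin by auto. simpl. lia.
  - auto.
Qed.

Local Close Scope nat_scope.
Local Open Scope R_scope.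

Definition meas (t : list bool) : R := (/2) ^ length t.
Definition lsum (l : list R) : R := fold_right Rplus 0 l.

Lemma lsum_app l1 l2 : lsum (l1 ++ l2) = lsum l1 + lsum l2.
Proof. induction l1; simpl; [lra| unfold lsum in *; simpl; rewrite IHl1; lra]. Qed.

Lemma meas_pos t : 0 < meas t.
Proof. unfold meas. apply pow_lt. lra. Qed.

Lemma lsum_nonneg l : 0 <= lsum (map meas l).
Proof. induction l; simpl; [lra|]. pose proof (meas_pos a). unfold lsum in *; simpl; lra. Qed.

Lemma sum_nth_le (l : list (list bool)) N : (N < length l)%nat ->
  sum_f_R0 (fun k => meas (nth k l [])) N <= lsum (map meas l).
Proof.
  revert N; induction l as [|a l IH]; intros N HN; simpl in HN; [lia|].
  destruct N.
  - simpl. pose proof (lsum_nonneg l). unfold lsum in *; simpl; lra.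
  - rewrite decomp_sum by lia. simpl pred. specialize (IH N ltac:(lia)).
    simpl. unfold lsum in *. simpl. lra.
Qed.

Definition Lst (D : nat -> list (list bool)) (N : nat) := concat (map D (seq 0 (S N))).

Lemma Lst_S D N : Lst D (S N) = Lst D N ++ D (S N).
Proof. unfold Lst. rewrite (seq_S (S N)), map_app, concat_app. simpl. rewrite app_nil_r. reflexivity. Qed.

Lemma Lst_prefix D k N : (k <= N)%nat -> exists r, Lst D N = Lst D k ++ r.
Proof.
  induction N; intros H.
  - assert (k = 0%nat) by lia. subst. exists []. rewrite app_nil_r; auto.
  - destruct (Nat.eq_dec k (S N)). subst. exists []. rewrite app_nil_r; auto.
    destruct IHN as [r Hr]; [lia|]. exists (r ++ D (S N)). rewrite Lst_S, Hr, app_assoc. auto.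
Qed.

Lemma Lst_len D N : (forall n, D n <> []) -> (S N <= length (Lst D N))%nat.
Proof.
  intros HD. induction N.
  - unfold Lst. simpl. rewrite app_nil_r. specialize (HD 0%nat). destruct (D 0%nat); simpl; [congruence|lia].
  - rewrite Lst_S, length_app. specialize (HD (S N)). destruct (D (S N)); simpl; [congruence|lia].
Qed.

Lemma Lst_sum D N : lsum (map meas (Lst D N)) = sum_f_R0 (fun n => lsum (map meas (D n))) N.
Proof.
  induction N.
  - unfold Lst. simpl. rewrite app_nil_r. reflexivity.
  - rewrite Lst_S, map_app, lsum_app, IHN. simpl. reflexivity.
Qed.

Lemma s_eq D k N : (forall n, D n <> []) -> (k <= N)%nat ->
  nth k (Lst D k) [] = nth k (Lst D N) [].
Proof.
  intros HD H. destruct (Lst_prefix D k N H) as [r ->].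
  rewrite app_nth1; auto. pose proof (Lst_len D k HD). lia.
Qed.

Lemma geom N : sum_f_R0 (fun n => (/2)^n) N <= 2 - (/2)^N.
Proof.
  induction N; simpl; [lra|]. lra.
Qed.

Lemma null_subset (X Y : (nat -> bool) -> Prop) :
  (forall x, Y x -> X x) -> null_set X -> null_set Y.
Proof.
  intros H HX eps Heps. destruct (HX eps Heps) as [s [Hs1 Hs2]].
  exists s; split; auto.
Qed.

Lemma null_of_blocks (X : (nat -> bool) -> Prop) :
  (forall eps, 0 < eps -> exists C : nat -> list (list bool),
     (forall x, X x -> exists n t, In t (C n) /\ extends t x) /\
     (forall N, sum_f_R0 (fun n => lsum (map meas (C n))) N <= eps)) ->
  null_set X.
Proof.
  intros H eps Heps.
  destruct (H (eps/2)) as [C [HC1 HC2]]; [lra|].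
  destruct (pow_lt_1_zero (/2) ltac:(rewrite Rabs_pos_eq; lra) (eps/4) ltac:(lra)) as [K HK].
  specialize (HK K (le_n K)). rewrite Rabs_pos_eq in HK by (apply pow_le; lra).
  set (D := fun n => C n ++ [repeat false (n + K)]).
  assert (HD : forall n, D n <> []).
  { intros n. unfold D. destruct (C n); discriminate. }
  exists (fun k => nth k (Lst D k) []). split.
  - intros x Hx. destruct (HC1 x Hx) as [n [t [Ht Hext]]].
    assert (Hin : In t (Lst D n)).
    { unfold Lst. apply in_concat. exists (D n). split.
      - apply in_map. apply in_seq. lia.
      - unfold D. apply in_or_app. left; auto. }
    destruct (In_nth (Lst D n) t [] Hin) as [k [Hk Hkt]].
    exists k. rewrite (s_eq D k (Nat.max k n)) by (auto; lia).
    destruct (Lst_prefix D n (Nat.max k n)) as [r ->]; [lia|].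
    rewrite app_nth1 by auto. rewrite Hkt. auto.
  - intros N.
    rewrite (sum_eq _ (fun k => meas (nth k (Lst D N) []))) by (intros; unfold meas; rewrite (s_eq D i N); auto).
    eapply Rle_trans; [apply sum_nth_le; apply (Lst_len D N HD)|].
    rewrite Lst_sum.
    rewrite (sum_eq _ (fun n => lsum (map meas (C n)) + (/2)^n * (/2)^K)).
    2:{ intros i _. unfold D. rewrite map_app, lsum_app. simpl. unfold meas.
        rewrite repeat_length, pow_add. unfold lsum; simpl. ring. }
    rewrite sum_plus, <- scal_sum. specialize (HC2 N). pose proof (geom N).
    pose proof (pow_lt (/2) N ltac:(lra)). pose proof (pow_lt (/2) K ltac:(lra)). assert (Hs : sum_f_R0 (pow (/2)) N <= 2) by (eapply Rle_trans; [apply (geom N)|lra]). nra.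
Qed.

Lemma term_bound (c L n : nat) :
  (c * ((n+1)*(n+2)) <= 2 * 2 ^ L)%nat ->
  INR c * (/2)^L <= 2/(INR n+1) - 2/(INR n+2).
Proof.
  intros H. apply le_INR in H.
  rewrite !mult_INR, pow_INR, !plus_INR in H. simpl INR in H.
  replace (1+1) with 2 in H by ring.
  rewrite pow_inv.
  set (y := INR n) in *. set (p := 2^L) in *.
  assert (Hp : 0 < p) by (apply pow_lt; lra).
  assert (Hy : 0 <= y) by apply pos_INR.
  replace (INR c * / p) with ((INR c * ((y+1)*(y+2))) * /(p*((y+1)*(y+2)))) by (field; lra).
  replace (2/(y+1) - 2/(y+2)) with ((2*p) * /(p*((y+1)*(y+2)))) by (field; lra).
  apply Rmult_le_compat_r; [left; apply Rinv_0_lt_compat; nra | lra].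
Qed.

Lemma tele (g : nat -> R) m N :
  (forall n, g n <= 2/(INR (m+n)+1) - 2/(INR (m+n)+2)) ->
  sum_f_R0 g N <= 2/(INR m + 1) - 2/(INR (m+N) + 2).
Proof.
  intros H. induction N.
  - simpl. specialize (H 0%nat). rewrite Nat.add_0_r in *. lra.
  - simpl. specialize (H (S N)). rewrite Nat.add_succ_r, S_INR in *.
    replace (INR (m+N)+1+1) with (INR (m+N)+2) in H by ring. lra.
Qed.

Lemma lsum_const l L : (forall t, In t l -> length t = L) ->
  lsum (map meas l) = INR (length l) * (/2)^L.
Proof.
  induction l as [|a l IH]; intros H; [unfold lsum; simpl; lra|].
  change (lsum (map meas (a :: l))) with (meas a + lsum (map meas l)).
  change (length (a :: l)) with (S (length l)).
  rewrite S_INR. rewrite IH by (intros; apply H; right; auto).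
  unfold meas. rewrite (H a) by (left; auto). ring.
Qed.

Lemma key (psi : slalom) : Sset psi -> null_set (fun x => ~ R3 psi (phi x)).
Proof.
  intros [Hpb Hc]. apply null_of_blocks. intros eps Heps.
  destruct (archimed_cor1 (eps/2)) as [m [Hm Hm0]]; [lra|].
  exists (fun n => map (code (Lb (m+n))) (filter (psi (m+n)%nat) (seq 0 (b (m+n))))).
  split.
  - intros x Hx. unfold R3 in Hx.
    assert (exists n, (m <= n)%nat /\ psi n (ibit n x) = true) as [n [Hmn Hn]].
    { apply NNPP; intro H. apply Hx. exists m. intros n Hn Hsub. apply H. exists n.
      split; [exact Hn|]. apply Hsub. unfold phi. apply Nat.eqb_refl. }
    exists (n - m)%nat, (map x (seq 0 (Lb n))).
    replace (m + (n-m))%nat with n by lia. split.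
    + apply in_map_iff. exists (ibit n x). split.
      * unfold ibit. apply code_decode. rewrite length_map, length_seq; auto.
      * apply filter_In. split; [apply in_seq; split; [lia| simpl; apply ibit_lt] | exact Hn].
    + intros i Hi. rewrite length_map, length_seq in Hi.
      rewrite nth_indep with (d' := x 0%nat) by (rewrite length_map, length_seq; lia).
      rewrite map_nth, seq_nth by lia. reflexivity.
  - intros N. eapply Rle_trans; [apply (tele _ m N)|].
    + intros n. rewrite (lsum_const _ (Lb (m+n))).
      2:{ intros t Ht. apply in_map_iff in Ht. destruct Ht as [j [<- _]]. apply code_length. }
      rewrite length_map. apply term_bound. apply key_nat. apply Hc.
    + assert (0 < INR m) by (apply lt_0_INR; lia).
      assert (/(INR m + 1) <= / INR m) by (apply Rinv_le_contravar; lra).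
      assert (0 < / (INR (m+N) + 2)) by (apply Rinv_0_lt_compat; pose proof (pos_INR (m+N)); lra).
      unfold Rdiv. lra.
Qed.

Lemma E_nonempty (E : (nat -> nat) -> Prop) : size_aleph1 E -> exists e, E e.
Proof.
  intros [Hnc _]. apply NNPP; intro H. apply Hnc. exists (fun _ _ => 0%nat).
  intros x Hx. exfalso; apply H; eauto.
Qed.

Lemma phi_Shat (E : (nat -> nat) -> Prop) x : (exists e, E e) -> Shat E (phi x).
Proof.
  intros [e He]. exists e. split; [exact He|]. split.
  - intros h i Hi. unfold phi in Hi. apply Nat.eqb_eq in Hi. subst. apply ibit_lt.
  - intros h. unfold card_at. apply Nat.le_trans with 1%nat.
    + apply filter_le1. apply seq_NoDup.
    + pose proof (rho_ge h). assert (rho h ^ e h <> 0)%nat by (apply Nat.pow_nonzero; lia). lia.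
Qed.

Theorem lemma2 (E : (nat -> nat) -> Prop)
  (HE : R3_parameter E) (HE1 : size_aleph1 E) :
  (forall A : slalom -> Prop, R3_unbounded E A ->
     exists F : {psi : slalom | A psi} -> ((nat -> bool) -> Prop),
       (forall a, null_set (F a)) /\ (forall x, exists a, F a x)) /\
  (forall X : (nat -> bool) -> Prop, ~ null_set X ->
     exists f : {x : nat -> bool | X x} -> slalom,
       (forall x, Shat E (f x)) /\
       (forall psi, Sset psi -> exists x, R3 psi (f x))).
Proof.
  pose proof (E_nonempty E HE1) as HEn.
  split.
  - intros A [HA Hunb].
    exists (fun a x => ~ R3 (proj1_sig a) (phi x)). split.
    + intros [psi Hpsi]. simpl. apply key. apply HA, Hpsi.
    + intros x. apply NNPP; intro H. apply Hunb. exists (phi x). split; [apply phi_Shat; auto|].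
      intros psi Hpsi. apply NNPP; intro H2. apply H. exists (exist _ psi Hpsi). simpl. exact H2.
  - intros X HX. exists (fun x => phi (proj1_sig x)). split.
    + intros; apply phi_Shat; auto.
    + intros psi Hpsi. apply NNPP; intro H. apply HX.
      apply null_subset with (fun x => ~ R3 psi (phi x)); [|apply key; auto].
      intros x Hx H2. apply H. exists (exist _ x Hx). exact H2.
Qed.
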